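(* Let $V$ be an $N$-dimensional vector space over $\mathbb{F}_q$, $\mathcal{F}$ a spanning family in $V$ with projective metric $d_{\mathcal{F}}$, and $\mathcal{C}\subseteq V$ a code with at least two elements and minimum distance $d=d_{\mathcal{F}}(\mathcal{C})$. Then $|\mathcal{C}|\le q^{N-\mu_{\mathcal{F}}(d-1)}\le q^{N-d+1}$.
   Context: A spanning family is a set $\mathcal{F}$ of pairwise linearly independent nonzero vectors with $\langle\mathcal{F}\rangle=V$; $\operatorname{wt}_{\mathcal{F}}(v)=\min\{|I|:I\subseteq\mathcal{F},v\in\langle I\rangle\}$, $d_{\mathcal{F}}(x,y)=\operatorname{wt}_{\mathcal{F}}(y-x)$, and $d_{\mathcal{F}}(\mathcal{C})=\min\{d_{\mathcal{F}}(x,y):x,y\in\mathcal{C},x\neq y\}$. For an integer $0\le t\le N$, $\mu_{\mathcal{F}}(t)$ is the maximum cardinality of a subset $\mathcal{G}\subseteq\mathcal{F}$ whose elements are linearly independent and such that every $v\in\langle\mathcal{G}\rangle$ has $\operatorname{wt}_{\mathcal{F}}(v)\le t$. *)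

(* Defs.v *)
(* V = 'rV[F]_N, the canonical N-dimensional F-vector space,
   F a finite field with q = #|F|. *)
From HB Require Import structures.
From mathcomp Require Import all_boot all_order all_algebra all_field.
Set Implicit Arguments. Unset Strict Implicit. Unset Printing Implicit Defensive.
Import GRing.Theory.
Local Open Scope ring_scope.

Section ProjMetric.
Variables (F : finFieldType) (N : nat).
Local Notation V := 'rV[F]_N.

Definition spanS (I : {set V}) : {vspace V} := (<<enum I>>)%VS.

Definition spanning_family (Fm : {set V}) : Prop :=
  [/\ (0 : V) \notin Fm,
      (forall u v, u \in Fm -> v \in Fm -> u != v -> free [:: u; v])
    & spanS Fm = fullv].

(* wt_F(v) = min{|I| : I subset F, v in <I>}  (the default #|Fm| is never
   used when Fm spans V, since I = Fm is always admissible) *)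
Definition wtF (Fm : {set V}) (v : V) : nat :=
  \big[minn/#|Fm|]_(I : {set V} | (I \subset Fm) && (v \in spanS I)) #|I|.

Definition distF (Fm : {set V}) (x y : V) : nat := wtF Fm (y - x).

(* minimum distance of a code with at least two elements (default N unused) *)
Definition min_distF (Fm C : {set V}) : nat :=
  \big[minn/N]_(p : V * V | [&& p.1 \in C, p.2 \in C & p.1 != p.2])
     distF Fm p.1 p.2.

Definition muF (Fm : {set V}) (t : nat) : nat :=
  \max_(G : {set V} | [&& G \subset Fm, free (enum G)
                       & [forall v : V, (v \in spanS G) ==> (wtF Fm v <= t)%N]])
     #|G|.

End ProjMetric.

(* Main.v *)
Require Import Defs.
From HB Require Import structures.
From mathcomp Require Import all_boot all_order all_algebra all_field zify.
Import GRing.Theory.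

Lemma bigmin_le_seq (I : eqType) (r : seq I) (P : pred I) (f : I -> nat) x0 i0 :
  i0 \in r -> P i0 -> (\big[minn/x0]_(i <- r | P i) f i <= f i0)%N.
Proof.
elim: r => [|a r IH] //=; rewrite in_cons big_cons => /orP [/eqP <- -> | Hr Pi].
  exact: geq_minl.
case: (P a); last exact: IH.
exact: leq_trans (geq_minr _ _) (IH Hr Pi).
Qed.

Lemma bigmin_le (I : finType) (P : pred I) (f : I -> nat) x0 i0 :
  P i0 -> (\big[minn/x0]_(i | P i) f i <= f i0)%N.
Proof. by apply: bigmin_le_seq; rewrite mem_index_enum. Qed.

Section S.
Variables (F : finFieldType) (N : nat).
Local Notation V := 'rV[F]_N.

Lemma dimV : dim V = N. Proof. by rewrite /dim /= mul1n. Qed.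

Lemma wt_le (Fm I : {set V}) v : I \subset Fm -> v \in spanS I -> (wtF Fm v <= #|I|)%N.
Proof. by move=> H1 H2; rewrite /wtF; apply: bigmin_le; rewrite H1 H2. Qed.

Lemma spanS0 : spanS (set0 : {set V}) = 0%VS.
Proof. by rewrite /spanS enum_set0 span_nil. Qed.

Lemma wt_gt0 (Fm : {set V}) v : (v != 0)%R -> spanS Fm = fullv -> (0 < wtF Fm v)%N.
Proof.
move=> v0 sF; rewrite /wtF; apply: (big_ind (fun x => 0 < x)%N) => //.
- rewrite card_gt0; apply/negP => /eqP F0; move: sF; rewrite F0 spanS0 => E.
  by move: (memvf v); rewrite -E memv0 (negbTE v0).
- by move=> a b Ha Hb; rewrite leq_min Ha Hb.
- move=> I /andP [_ HI]; rewrite card_gt0; apply/negP => /eqP I0.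
  by move: HI; rewrite I0 spanS0 memv0 (negbTE v0).
Qed.

Lemma free_enum_dim (G : {set V}) : free (enum G) -> \dim (spanS G) = #|G|.
Proof. by move=> /eqP; rewrite /spanS cardE. Qed.

Lemma exists_free (Fm : {set V}) k : spanS Fm = fullv -> (k <= N)%N ->
  exists G : {set V}, [/\ G \subset Fm, free (enum G) & #|G| = k].
Proof.
move=> sF; elim: k => [|k IH] Hk.
  by exists set0; rewrite sub0set cards0 enum_set0 nil_free.
have [G [GF fG cG]] := IH (ltnW Hk).
have dG := @free_enum_dim G fG.
case: (boolP [forall u in Fm, u \in spanS G]) => [/forall_inP Hall | ].
  have : (spanS Fm <= spanS G)%VS.
    by apply/span_subvP => u; rewrite mem_enum => /Hall.
  move=> /dimvS; rewrite sF dimvf dimV dG cG => H.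
  by move: (leq_ltn_trans H Hk); rewrite ltnn.
move=> /forall_inPn [u uF uG].
have uG' : u \notin G by apply: contra uG => uG; apply: memv_span; rewrite mem_enum.
exists (u |: G); split.
- by rewrite subUset sub1set uF GF.
- have P : perm_eq (enum (u |: G)) (u :: enum G).
    apply: uniq_perm; first exact: enum_uniq.
      by rewrite /= mem_enum uG' enum_uniq.
    by move=> w; rewrite mem_enum in_setU1 in_cons mem_enum.
  by rewrite (perm_free P) free_cons fG andbT.
- by rewrite cardsU1 uG' cG.
Qed.

End S.
Theorem theorem7p1 (F : finFieldType) (N : nat) (Fm C : {set 'rV[F]_N}) :
  spanning_family Fm -> (1 < #|C|)%N ->
  let d := min_distF Fm C in
  (#|C| <= #|F| ^ (N - muF Fm (d - 1)))%N /\
  (#|F| ^ (N - muF Fm (d - 1)) <= #|F| ^ (N - d + 1))%N.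
Proof.
move=> [F0 _ sF] C2 d.
have N0 : (0 < N)%N.
  case: N Fm C sF C2 d {F0} => // Fm C _ C2.
  move: (subset_leq_card (subsetT C)); rewrite cardsT card_mx /= => H.
  by move: (leq_trans C2 H).
have dN : (d <= N)%N.
  rewrite /d /min_distF; apply: (big_rec (fun x => x <= N)%N) => //.
  by move=> i x _ Hx; exact: leq_trans (geq_minr _ x) Hx.
have d0 : (0 < d)%N.
  rewrite /d /min_distF; apply: (big_ind (fun x => 0 < x)%N) => //.
  - by move=> a b Ha Hb; rewrite leq_min Ha Hb.
  - move=> [x y] /and3P [_ _ xy] /=; rewrite /distF; apply: wt_gt0 => //.
    by rewrite subr_eq0 eq_sym.
have dle : forall x y, x \in C -> y \in C -> x != y -> (d <= wtF Fm (y - x))%N.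
  move=> x y xC yC xy; rewrite /d /min_distF.
  by apply: (@bigmin_le _ _ (fun p => distF Fm p.1 p.2) N (x, y)); rewrite /= xC yC xy.
split; last first.
  apply: leq_pexp2l; first by apply/card_gt0P; exists 0%R.
  have [G [GF fG cG]] := @exists_free F N Fm (d - 1) sF (leq_trans (leq_subr _ _) dN).
  have : (#|G| <= muF Fm (d - 1))%N.
    rewrite /muF; apply: leq_bigmax_cond; rewrite GF fG /=.
    by apply/forallP => v; apply/implyP => vG; rewrite -cG; apply: wt_le.
  rewrite cG => H; apply: leq_trans (leq_sub2l N H) _.
  lia.
pose P := fun G : {set 'rV[F]_N} => [&& G \subset Fm, free (enum G)
                       & [forall v : 'rV[F]_N, (v \in spanS G) ==> (wtF Fm v <= d - 1)%N]].
have [G PG eqG] : {G : {set 'rV[F]_N} | G \in P & \max_(i in P) #|i| = #|G| }.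
  apply: eq_bigmax_cond; apply/card_gt0P; exists set0.
  rewrite unfold_in /P sub0set enum_set0 nil_free /=.
  apply/forallP => v; apply/implyP; rewrite spanS0 memv0 => /eqP ->.
  have := @wt_le F N Fm set0 0%R (sub0set Fm); rewrite spanS0 mem0v cards0 => /(_ isT).
  by rewrite leqn0 => /eqP ->.
have muE : muF Fm (d - 1) = #|G| := eqG.
rewrite muE.
move: PG; rewrite unfold_in /P => /and3P [GF fG /forallP GW].
pose W := spanS G.
have dW : \dim W = #|G| := @free_enum_dim F N G fG.
pose f := addv_pi1 fullv W.
have inj : {in C &, injective f}.
  move=> x y xC yC fxy; apply/eqP; apply/negPn/negP => xy.
  have : (y - x)%R \in W.
    rewrite -(addv_pi1_pi2 (subvP (addvSl fullv W) _ (memvf x))).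
    rewrite -(addv_pi1_pi2 (subvP (addvSl fullv W) _ (memvf y))).
    rewrite -/f fxy (addrC (f y) (addv_pi2 _ _ y)) addrKA; apply: rpredB; exact: memv_pi2.
  move=> /(implyP (GW _)) H; move: (leq_trans (dle x y xC yC xy) H).
  lia.
rewrite -(card_in_imset inj).
have sub : [set f x | x in C] \subset (fullv :\: W)%VS.
  by apply/subsetP => _ /imsetP [x _ ->]; exact: memv_pi.
apply: leq_trans (subset_leq_card sub) _.
rewrite card_vspace.
have := dimv_cap_compl fullv W; rewrite capfv dimvf dW => E.
rewrite dimV in E.
have E2 : \dim (fullv :\: W)%VS = N - #|G| by lia.
by rewrite E2.
Qed.
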